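(* Let $\mathcal{N}=\{1,\dots,N\}$, $K\ge1$, $M\ge0$, and let $\underline{\mathsf{d}}$ be uniformly distributed over $\mathcal{N}^K$. For any $s\in\{1,2,\dots,\min\{N,K\}\}$, \[ \bar{R}(M,\mathcal{N},K)\ge \Pr\bigl(w(\underline{\mathsf{d}})\ge s\bigr)\,\bar{R}_s(M,\mathcal{N},s). \]
   Context: Caching problem: a server holds $N$ files of $F$ bits each, connected through a shared error-free link to $K$ users each with a cache of $MF$ bits. In the placement phase each user stores an arbitrary function of the files of at most $MF$ bits; in the delivery phase the users' demand vector $\underline{d}\in\mathcal{N}^K$ is revealed, the server sends a message over the shared link, and each user must reconstruct its requested file from the message and its cache. The rate is message length divided by $F$. $\bar{R}(M,\mathcal{N},K)$ is the optimal expected rate (infimum over all schemes of the expected rate, achievable with vanishing error probability for all large $F$) when the demand vector is uniform over $\mathcal{N}^K$. For a vector $\underline{d}$, $w(\underline{d})$ is the number of distinct entries of $\underline{d}$. For $s\in\{1,\dots,\min\{N,K\}\}$, $\bar{R}_s(M,\mathcal{N},K)$ is the optimal expected rate when the demand vector is uniform over $\mathcal{N}^K$ conditioned on $w(\underline{d})=s$ (both placement and delivery optimized for this conditional distribution). In particular, $\bar{R}_s(M,\mathcal{N},s)$ is the optimal expected rate for $s$ users requesting files chosen uniformly at random from $\mathcal{N}$ without replacement. *)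

(* Defs.v *)
From HB Require Import structures.
From mathcomp Require Import all_boot all_order all_algebra.
From mathcomp Require Import boolp classical_sets reals.
Set Implicit Arguments. Unset Strict Implicit. Unset Printing Implicit Defensive.
Import Order.TTheory GRing.Theory Num.Theory.
Local Open Scope ring_scope.

Definition file (F : nat) := {ffun 'I_F -> bool}.
(* The library content: N files (file n is W_{n+1}). *)
Definition library (N F : nat) := {ffun 'I_N -> file F}.
Definition demand (N K : nat) := {ffun 'I_K -> 'I_N}.

Definition w (N K : nat) (d : demand N K) : nat := #|[set d k | k : 'I_K]|.

(* A caching scheme with K users, N files of F bits, cache capacity M F bits.
   - placement: each user k stores phi k W, a bit string of exactly
     cache_len bits, with cache_len <= M F;
   - delivery: for demand d the server sends psi d W, a bit string of exactly
     msg_len d bits (rate for demand d is msg_len d / F);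
   - decoding: user k decodes mu d k X Z, an estimate of W_{d k}. *)
Record scheme (R : realType) (N K F : nat) (M : R) := Scheme {
  cache_len : nat;
  cache_ok : (cache_len%:R <= M * F%:R :> R);
  phi : 'I_K -> library N F -> seq bool;
  phi_size : forall k W, size (phi k W) = cache_len;
  msg_len : demand N K -> nat;
  psi : demand N K -> library N F -> seq bool;
  psi_size : forall d W, size (psi d W) = msg_len d;
  mu : demand N K -> 'I_K -> seq bool -> seq bool -> file F
}.

(* Probability (files i.i.d. uniform) that some user fails to decode under
   demand d. *)
Definition err_prob (R : realType) (N K F : nat) (M : R)
    (S : scheme N K F M) (d : demand N K) : R :=
  #|[pred W : library N F |
      [exists k : 'I_K, mu S d k (psi S d W) (phi S k W) != W (d k)]]|%:R
  / #|{: library N F}|%:R.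

Definition exp_rate (R : realType) (N K F : nat) (M : R)
    (S : scheme N K F M) (D : {set demand N K}) : R :=
  (\sum_(d in D) ((msg_len S d)%:R / F%:R)) / #|D|%:R.

Definition achievable (R : realType) (N K : nat) (M : R)
    (D : {set demand N K}) (r : R) : Prop :=
  forall eps : R, 0 < eps -> exists F0 : nat, forall F : nat, (F0 <= F)%N ->
    (0 < F)%N ->
    exists S : scheme N K F M,
      (forall d, d \in D -> err_prob S d <= eps) /\ exp_rate S D <= r.

Definition opt_rate (R : realType) (N K : nat) (M : R)
    (D : {set demand N K}) : R :=
  inf [set r : R | achievable M D r].

Definition Rbar (R : realType) (N K : nat) (M : R) : R :=
  opt_rate (K := K) (N := N) M [set: demand N K].

Definition Rbar_s (R : realType) (s N K : nat) (M : R) : R :=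
  opt_rate (K := K) (N := N) M [set d : demand N K | w d == s].

Definition prob_w_ge (R : realType) (N K s : nat) : R :=
  #|[set d : demand N K | (s <= w d)%N]|%:R / #|{: demand N K}|%:R.

(* Main.v *)
Require Import Defs.
From HB Require Import structures.
From mathcomp Require Import all_boot all_order all_algebra all_fingroup.
From mathcomp Require Import primitive_action alt.
From mathcomp Require Import boolp classical_sets reals.
From mathcomp Require Import ring lra.
Import Order.TTheory GRing.Theory Num.Theory.
Set Implicit Arguments. Unset Strict Implicit. Unset Printing Implicit Defensive.

Definition fo (N K : nat) (d : demand N K) : {set 'I_K} :=
  [set k : 'I_K | [forall k' : 'I_K, (k' < k)%N ==> (d k' != d k)]].

Lemma fo_inj N K (d : demand N K) : {in fo d &, injective d}.
Proof.
move=> k1 k2; rewrite !inE => /forallP H1 /forallP H2 Hd.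
case: (ltngtP k1 k2) => [lt|lt|/val_inj //].
- by move: (H2 k1); rewrite lt Hd eqxx.
- by move: (H1 k2); rewrite lt Hd eqxx.
Qed.

Lemma fo_img N K (d : demand N K) : d @: fo d = [set d k | k : 'I_K].
Proof.
apply/setP=> v; apply/imsetP/imsetP => [[k _ ->]|[k _ ->]]; first by exists k.
case: (@arg_minnP _ k (fun i : 'I_K => d i == d k) (fun i : 'I_K => val i) (eqxx (d k))) => k1 /eqP Hk1 Hmin.
exists k1; last by rewrite Hk1.
rewrite inE; apply/forallP => k'; apply/implyP => lt; apply/negP => /eqP E.
have := Hmin k'; rewrite E Hk1 eqxx => /(_ isT); by rewrite leqNgt lt.
Qed.

Lemma card_fo N K (d : demand N K) : #|fo d| = w d.
Proof. by rewrite /w -fo_img card_in_imset //; apply: fo_inj. Qed.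

Lemma fo_pi N K (pi : 'I_N -> 'I_N) (d : demand N K) : injective pi ->
  fo [ffun k => pi (d k)] = fo d.
Proof.
move=> ipi; apply/setP => k; rewrite !inE; apply/eq_forallb => k'.
by rewrite !ffunE (inj_eq ipi).
Qed.

Lemma w_pi N K (pi : 'I_N -> 'I_N) (d : demand N K) : injective pi ->
  w [ffun k => pi (d k)] = w d.
Proof. by move=> ipi; rewrite -!card_fo fo_pi. Qed.

Lemma w_inj N s (e : demand N s) : injective e -> w e = s.
Proof. by move=> ie; rewrite /w card_imset // card_ord. Qed.


Definition sel (N K s : nat) (k0 : 'I_K) (d : demand N K) : {ffun 'I_s -> 'I_K} :=
  [ffun j : 'I_s => nth k0 (enum (fo d)) j].

Lemma sel_pi N K s k0 (pi : 'I_N -> 'I_N) (d : demand N K) : injective pi ->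
  sel s k0 [ffun k => pi (d k)] = sel s k0 d.
Proof. by move=> ipi; apply/ffunP => j; rewrite !ffunE fo_pi. Qed.

Lemma sel_fo N K s k0 (d : demand N K) j : (s <= w d)%N -> sel s k0 d j \in fo d.
Proof.
move=> H; rewrite ffunE -mem_enum; apply: mem_nth.
by rewrite -cardE card_fo (leq_trans (ltn_ord j)).
Qed.

Lemma sel_inj N K s k0 (d : demand N K) : (s <= w d)%N -> injective (sel s k0 d).
Proof.
move=> H i j; rewrite !ffunE => /eqP; rewrite nth_uniq ?enum_uniq //.
- by move/eqP/val_inj.
- by rewrite -cardE card_fo (leq_trans (ltn_ord i)).
- by rewrite -cardE card_fo (leq_trans (ltn_ord j)).
Qed.

Definition esel (N K s : nat) (k0 : 'I_K) (d : demand N K) : demand N s :=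
  [ffun j => d (sel s k0 d j)].

Lemma esel_inj N K s k0 (d : demand N K) : (s <= w d)%N -> injective (esel s k0 d).
Proof.
move=> H i j E; apply: (@sel_inj _ _ _ k0 d H).
apply: (fo_inj (sel_fo k0 i H) (sel_fo k0 j H)); move: E; rewrite !ffunE.
by [].
Qed.

Lemma ext_pi N s (e e' : 'I_s -> 'I_N) : (s <= N)%N -> injective e -> injective e' ->
  exists pi : 'I_N -> 'I_N, injective pi /\ forall j, pi (e j) = e' j.
Proof.
move=> sN ie ie'.
have sN' : (s <= #|'I_N|)%N by rewrite card_ord.
have tr := ntransitive_weak sN' (Sym_trans 'I_N).
pose te := [tuple e j | j < s]; pose te' := [tuple e' j | j < s].
have dt : forall f : 'I_s -> 'I_N, injective f -> [tuple f j | j < s] \in s.-dtuple([set: 'I_N]%SET).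
  move=> f fi; apply/dtuple_onP; split=> [i j|i]; last by rewrite inE.
  by rewrite !tnth_mktuple => /fi.
have [a _ Ha] := atransP2 tr (dt _ ie) (dt _ ie').
exists a; split; first exact: perm_inj.
move=> j; have := congr1 (fun t => tnth t j) Ha.
rewrite /= tnth_map tnth_ord_tuple => ->; by rewrite !(tnth_map, tnth_ord_tuple) /= /aperm.
Qed.

Lemma w_inj_inv N s (e : demand N s) : w e = s -> injective e.
Proof.
move=> He; rewrite /w in He.
have /imset_injP H : #|[set e k | k : 'I_s]| == #|'I_s|.
  by rewrite He card_ord.
by move=> i j; apply: H.
Qed.

Definition amin (T : finType) (A : {set T}) (L : T -> nat) (dflt : T) : T :=
  match [pick x in A] with Some x0 => [arg min_(x < x0 in A) L x] | None => dflt end.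

Lemma amin_spec (T : finType) (A : {set T}) (L : T -> nat) dflt x : x \in A ->
  amin A L dflt \in A /\ forall y, y \in A -> (L (amin A L dflt) <= L y)%N.
Proof.
move=> xA; rewrite /amin; case: pickP => [x0 Hx0|H]; last by rewrite H in xA.
by case: arg_minnP => // y Hy Hm; split.
Qed.

Lemma core N K s (k0 : 'I_K) (L : demand N K -> nat) : (s <= N)%N ->
  (0 < #|[set d : demand N K | (s <= w d)%N]|)%N ->
  exists sg : 'I_s -> 'I_K, exists ext : demand N s -> demand N K,
   (forall e, e \in [set e : demand N s | w e == s] -> forall j, ext e (sg j) = e j) /\
   (#|[set d : demand N K | (s <= w d)%N]| *
      \sum_(e in [set e : demand N s | w e == s]) L (ext e)
     <= #|[set e : demand N s | w e == s]| *
      \sum_(d in [set d : demand N K | (s <= w d)%N]) L d)%N.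
Proof.
move=> sN hW.
set W := [set d : demand N K | (s <= w d)%N].
set Ds := [set e : demand N s | w e == s].
case/card_gt0P: hW => d0 d0W.
pose Phi (sg : {ffun 'I_s -> 'I_K}) (e : demand N s) :=
  [set d in W | (sel s k0 d == sg) && (esel s k0 d == e)].
pose ext sg e := amin (Phi sg e) L d0.
pose Sig := [set sel s k0 d | d in W].
pose A sg := \sum_(e in Ds) L (ext sg e).
have eselDs : forall d, d \in W -> esel s k0 d \in Ds.
  move=> d; rewrite !inE => Hd; apply/eqP; apply: w_inj; exact: esel_inj.
have fib : forall sg e e', e \in Ds -> e' \in Ds -> (#|Phi sg e| <= #|Phi sg e'|)%N.
  move=> sg e e'; rewrite !inE => /eqP /w_inj_inv ie /eqP /w_inj_inv ie'.
  have [pi [ipi Hpi]] := ext_pi sN ie ie'.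
  pose f (d : demand N K) : demand N K := [ffun k => pi (d k)].
  have fi : injective f.
    move=> d1 d2 /ffunP H; apply/ffunP => k; apply: ipi; move: (H k); rewrite !ffunE.
    by [].
  rewrite -(card_imset (Phi sg e) fi); apply: subset_leq_card.
  apply/fintype.subsetP => _ /imsetP[d Hd ->]; move: Hd; rewrite !inE.
  case/and3P => Hw /eqP Hs /eqP He.
  rewrite w_pi // Hw /f (@sel_pi _ _ s k0 pi d ipi) Hs eqxx /=; apply/eqP/ffunP => j.
  rewrite /esel (@sel_pi _ _ s k0 pi d ipi) -Hpi -He !ffunE. by [].
have part : forall G : demand N K -> nat, \sum_(d in W) G d =
    \sum_(sg in Sig) \sum_(e in Ds) \sum_(d in Phi sg e) G d.
  move=> G.
  rewrite (partition_big (fun d => sel s k0 d) (mem Sig)); last first.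
    by move=> d Hd; apply: imset_f.
  apply: eq_bigr => sg _.
  rewrite (partition_big (fun d => esel s k0 d) (mem Ds)); last first.
    by move=> d /andP[Hd _]; apply: eselDs.
  apply: eq_bigr => e _; apply: eq_bigl => d; by rewrite !inE andbA.
have [sg0 [Hsg0 Hmin]] : exists sg0, sg0 \in Sig /\ forall sg, sg \in Sig -> (A sg0 <= A sg)%N.
  have H0 : sel s k0 d0 \in Sig by apply: imset_f.
  case: (@arg_minnP _ _ (mem Sig) A H0) => sg Hsg Hm; by exists sg.
pose n sg := #|Phi sg (esel s k0 d0)|.
have e0Ds := eselDs d0 d0W.
have Hn : forall sg e, e \in Ds -> #|Phi sg e| = n sg.
  by move=> sg e He; apply/eqP; rewrite eqn_leq !fib.
have nonempty : forall sg e, sg \in Sig -> e \in Ds -> exists x, x \in Phi sg e.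
  move=> sg e /imsetP[d1 Hd1 ->] He.
  have : (0 < #|Phi (sel s k0 d1) e|)%N.
    apply: (leq_trans _ (fib _ _ _ (eselDs d1 Hd1) He)).
    by apply/card_gt0P; exists d1; rewrite inE Hd1 !eqxx.
  by case/card_gt0P => x Hx; exists x.
have bnd : forall sg e, sg \in Sig -> e \in Ds ->
    (n sg * L (ext sg e) <= \sum_(d in Phi sg e) L d)%N.
  move=> sg e Hsg He; have [x Hx] := nonempty sg e Hsg He.
  have [_ Hm] := amin_spec L d0 Hx.
  rewrite -(Hn sg e He) -sum_nat_const; apply: leq_sum => d Hd; exact: Hm.
have cardW : #|W| = \sum_(sg in Sig) #|Ds| * n sg.
  rewrite -sum1_card part; apply: eq_bigr => sg _.
  rewrite -sum_nat_const; apply: eq_bigr => e He; by rewrite sum1_card Hn.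
have sumW : (\sum_(sg in Sig) n sg * A sg <= \sum_(d in W) L d)%N.
  rewrite part; apply: leq_sum => sg Hsg; rewrite /A big_distrr /=.
  by apply: leq_sum => e He; apply: bnd.
exists sg0, (ext sg0); split.
  move=> e He j; have [x Hx] := nonempty sg0 e Hsg0 He.
  have [Hin _] := amin_spec L d0 Hx.
  move: Hin; rewrite !inE => /and3P[_ /eqP Hs /eqP He'].
  by have := congr1 (fun f : demand N s => f j) He'; rewrite /= ffunE Hs => <-.
rewrite cardW -/(A sg0).
have -> : (\sum_(sg in Sig) #|Ds| * n sg) * A sg0 = #|Ds| * \sum_(sg in Sig) n sg * A sg0.
  by rewrite big_distrl big_distrr /=; apply: eq_bigr => sg _; rewrite mulnA.
rewrite leq_mul2l; apply/orP; right.
apply: leq_trans sumW; apply: leq_sum => sg Hsg; rewrite leq_mul2l.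
by rewrite Hmin ?orbT.
Qed.
Local Open Scope ring_scope.

Lemma exp_rate_ge0 (R : realType) N K F (M : R) (S : scheme N K F M) (D : {set demand N K}) :
  0 <= exp_rate S D.
Proof.
rewrite /exp_rate; apply: divr_ge0 => //; apply: sumr_ge0 => d _.
exact: divr_ge0.
Qed.

Lemma ach_ge0 (R : realType) N K (M : R) (D : {set demand N K}) r : achievable M D r -> 0 <= r.
Proof.
move=> /(_ 1 ltr01) [F0 HF0].
have [S [_ H]] := HF0 F0.+1 (leqnSn _) isT.
exact: (le_trans (exp_rate_ge0 S D) H).
Qed.

Lemma triv_ach (R : realType) N K (M : R) (D : {set demand N K}) :
  0 <= M -> achievable M D N%:R.
Proof.
move=> M0 eps heps; exists 0%N => F _ Fpos.
pose E := enum {: 'I_N * 'I_F}.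
have c0 : (0%N%:R <= M * F%:R :> R) by rewrite mulr_ge0.
pose S := @Scheme R N K F M 0%N c0 (fun k W => [::]) (fun k W => erefl)
  (fun _ => size E) (fun d W => [seq W p.1 p.2 | p <- E])
  (fun d W => size_map _ _)
  (fun d k X Z => [ffun i => nth false X (index (d k, i) E)]).
exists S; split.
  move=> d _; rewrite /err_prob.
  have -> : #|[pred W : library N F |
      [exists k : 'I_K, mu S d k (psi S d W) (phi S k W) != W (d k)]]| = 0%N.
    apply: eq_card0 => W; rewrite inE; apply/existsP => -[k].
    apply/negP; rewrite negbK; apply/eqP/ffunP => i; rewrite /= ffunE.
    have Hin : (d k, i) \in E by rewrite mem_enum.
    by rewrite (nth_map (d k, i)) ?index_mem // nth_index.
  by rewrite mul0r ltW.
rewrite /exp_rate /= sumr_const.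
have -> : (size E)%:R / F%:R = N%:R :> R.
  rewrite /E -cardE card_prod !card_ord natrM -mulrA divff ?mulr1 //.
  by rewrite pnatr_eq0 -lt0n Fpos.
case: (posnP #|D|) => [->|Dpos]; first by rewrite mulr0n mul0r.
by rewrite -[_ *+ _]mulr_natr mulfK // pnatr_eq0 -lt0n Dpos.
Qed.

Lemma rate_ineq (R : realType) (a b c nW nD NK F : nat) (r : R) :
  (0 < F)%N -> (0 < nW)%N -> (0 < NK)%N ->
  (nW * a <= nD * b)%N -> (b <= c)%N ->
  (c%:R / F%:R) / NK%:R <= r ->
  (a%:R / F%:R) / nD%:R <= r / (nW%:R / NK%:R).
Proof.
move=> Fp Wp Np Hab Hbc Hr.
have hF : (F%:R : R) != 0 by rewrite pnatr_eq0 -lt0n.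
have hW : (nW%:R : R) != 0 by rewrite pnatr_eq0 -lt0n.
have hN : (NK%:R : R) != 0 by rewrite pnatr_eq0 -lt0n.
have r0 : 0 <= r.
  by apply: (le_trans _ Hr); apply: divr_ge0 => //; apply: divr_ge0.
case: (posnP nD) => [->|Dp].
  by rewrite invr0 mulr0; apply: divr_ge0 => //; apply: divr_ge0.
have hD : (nD%:R : R) != 0 by rewrite pnatr_eq0 -lt0n.
have H1 : (a * nW <= c * nD)%N.
  rewrite [(a * nW)%N]mulnC; apply: (leq_trans Hab).
  by rewrite [(c * nD)%N]mulnC leq_mul2l Hbc orbT.
have E1 : (a%:R / F%:R) / nD%:R = (a * nW)%:R * (F%:R * nD%:R * nW%:R)^-1 :> R.
  by rewrite natrM; field; rewrite hF hD hW.
have E2 : (c * nD)%:R * (F%:R * nD%:R * nW%:R)^-1 = ((c%:R / F%:R) / NK%:R) * (NK%:R / nW%:R) :> R.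
  by rewrite natrM; field; rewrite hF hD hW hN.
rewrite E1; apply: (le_trans (y := (c * nD)%:R * (F%:R * nD%:R * nW%:R)^-1)).
  by apply: ler_wpM2r; [rewrite invr_ge0 !mulr_ge0 | rewrite ler_nat].
rewrite E2 invf_div; apply: ler_wpM2r => //; exact: divr_ge0.
Qed.

Lemma ach_s (R : realType) N K s (M : R) r (k0 : 'I_K) : (s <= N)%N ->
  (0 < #|[set d : demand N K | (s <= w d)%N]|)%N ->
  achievable M [set: demand N K] r ->
  achievable M [set e : demand N s | w e == s] (r / prob_w_ge R N K s).
Proof.
move=> sN hW hr eps heps; have [F0 HF0] := hr eps heps; exists F0 => F HF Fpos.
have [S [Herr Hrate]] := HF0 F HF Fpos.
have [sg [ext [Hext Hineq]]] := core k0 (msg_len S) sN hW.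
pose S' := @Scheme R N s F M (cache_len S) (cache_ok S)
  (fun j W => phi S (sg j) W) (fun j W => phi_size S (sg j) W)
  (fun e => msg_len S (ext e)) (fun e W => psi S (ext e) W)
  (fun e W => psi_size S (ext e) W)
  (fun e j X Z => mu S (ext e) (sg j) X Z).
exists S'; split.
  move=> e He; apply: (le_trans _ (Herr (ext e) (finset.in_setT _))).
  rewrite /err_prob; apply: ler_wpM2r; first by rewrite invr_ge0.
  rewrite ler_nat; apply: subset_leq_card; apply/fintype.subsetP => W.
  rewrite !inE => /existsP [j Hj]; apply/existsP; exists (sg j).
  by rewrite Hext.
rewrite /exp_rate /= -!mulr_suml -!natr_sum /prob_w_ge.
move: Hrate; rewrite /exp_rate -mulr_suml -natr_sum cardsT => Hrate.
apply: (rate_ineq Fpos hW _ Hineq _ Hrate).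
  by apply: (leq_trans hW); apply: max_card.
rewrite big_mkcond /= [X in (_ <= X)%N]big_mkcond /=; apply: leq_sum => d _.
by rewrite finset.in_setT; case: ifP.
Qed.
Unset Implicit Arguments.

Theorem lemma1 (R : realType) (N K : nat) (M : R) (s : nat) :
  (1 <= K)%N -> 0 <= M -> (1 <= s)%N -> (s <= minn N K)%N ->
  Rbar N K M >= prob_w_ge R N K s * Rbar_s s N s M.
Proof.
move=> K1 M0 s1 sNK.
have sN : (s <= N)%N by move: sNK; rewrite leq_min => /andP[].
have k0 : 'I_K by exists 0%N.
have Ane : nonempty [set r : R | achievable M [set: demand N K] r].
  by exists N%:R; apply: triv_ach.
rewrite /Rbar /opt_rate; apply: lb_le_inf => // r Hr.
case: (posnP #|[set d : demand N K | (s <= w d)%N]|) => [W0|Wp].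
  by rewrite /prob_w_ge W0 !mul0r; apply: (ach_ge0 Hr).
have H := ach_s k0 sN Wp Hr.
have Pp : 0 < prob_w_ge R N K s.
  rewrite /prob_w_ge divr_gt0 // ltr0n //.
  by apply: (leq_trans Wp); apply: max_card.
have : Rbar_s s N s M <= r / prob_w_ge R N K s.
  apply: ge_inf => //; exists 0 => x Hx; exact: (ach_ge0 Hx).
by rewrite ler_pdivlMr // mulrC.
Qed.
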